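(* There exists $C=C(m)>1$, depending only on $m=\dim M$, such that for every $g\in\mathcal{M}^{\mathsf{G},\mathsf{T}}$, $$C^{-1}|A|_g^2\le|\hat A_g|_g\le C|A|_g^2,\qquad C^{-1}|A|_g^2\le|\check A_g|_g\le C|A|_g^2 .$$
   Context: $M=\mathsf{G}/\mathsf{H}$ ($m=\dim M$) is an almost-effective homogeneous space with $\mathsf{G},\mathsf{H}$ compact connected, $Q$ an $\mathrm{Ad}(\mathsf{G})$-invariant inner product on $\mathfrak{g}$, $\mathfrak{m}=\mathfrak{h}^{\perp_Q}$, $\mathfrak{m}_0=\{X\in\mathfrak{m}:[\mathfrak{h},X]=0\}$. Let $\mathsf{T}$ be a torus in the gauge group $N_{\mathsf{G}}(\mathsf{H})/\mathsf{H}$ with Lie algebra $\mathfrak{t}\subset\mathfrak{m}_0$ abelian, and $\mathfrak{m}=\mathfrak{t}+\mathfrak{b}$ $Q$-orthogonally ($\mathfrak{b}\cong T(\mathsf{G}/\mathsf{H}\mathsf{T})$). $\mathcal{M}^{\mathsf{G},\mathsf{T}}$ is the set of $\mathsf{G}$-invariant metrics $g=g_{\mathfrak{t}}+g_{\mathfrak{b}}$ with $\mathfrak{t}\perp_g\mathfrak{b}$ and $g_{\mathfrak{b}}$ $\mathrm{Ad}(\mathsf{H}\mathsf{T})$-invariant. The O'Neill tensor $A$ is given by $A_XY=\frac12[X,Y]_{\mathfrak{t}}$ (orthogonal projection to $\mathfrak{t}$) for $X,Y\in\mathfrak{b}$, $A_U=0$ for $U\in\mathfrak{t}$, and $A_XU\in\mathfrak{b}$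 with $g(A_XU,Y)=-g(A_XY,U)$. With $\{X_i\}$, $\{U_j\}$ $g$-orthonormal bases of $\mathfrak{b}$, $\mathfrak{t}$: $|A|_g^2=\sum_{i,j}|A_{X_i}X_j|_g^2$, $\hat A_g(U,V)=\sum_ig(A_{X_i}U,A_{X_i}V)$ on $\mathfrak{t}$, $\check A_g(X,Y)=\sum_ig(A_XX_i,A_YX_i)$ on $\mathfrak{b}$, with norms taken with respect to $g$. *)

(* Defs.v *)
From HB Require Import structures.
From mathcomp Require Import all_boot all_order all_algebra.
From mathcomp Require Import boolp classical_sets reals.
Set Implicit Arguments. Unset Strict Implicit. Unset Printing Implicit Defensive.
Import Order.TTheory GRing.Theory Num.Theory.
Local Open Scope ring_scope.

Section LieDefs.
Variable R : realType.
Variable n : nat.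
Local Notation vec := 'rV[R]_n.

Definition bil (B : 'M[R]_n) (x y : vec) : R := (x *m B *m y^T) 0 0.

Definition is_lie_bracket (br : vec -> vec -> vec) : Prop :=
  [/\ forall (a : R) x y z, br (a *: x + y) z = a *: br x z + br y z,
      forall x y, br x y = - br y x &
      forall x y z, br x (br y z) + br y (br z x) + br z (br x y) = 0].

Definition ad_inv_inner_product (br : vec -> vec -> vec) (Q : 'M[R]_n) : Prop :=
  [/\ Q^T = Q, forall x : vec, x != 0 -> 0 < bil Q x x &
      forall z x y, bil Q (br z x) y + bil Q x (br z y) = 0].

Definition subalgebra (br : vec -> vec -> vec) (S : 'M[R]_n) : Prop :=
  forall x y : vec, (x <= S)%MS -> (y <= S)%MS -> (br x y <= S)%MS.

Definition ideal (br : vec -> vec -> vec) (S : 'M[R]_n) : Prop :=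
  forall x y : vec, (y <= S)%MS -> (br x y <= S)%MS.

Definition almost_effective (br : vec -> vec -> vec) (H : 'M[R]_n) : Prop :=
  forall I : 'M[R]_n, ideal br I -> (I <= H)%MS -> I = 0.

(* m = h^{perp_Q} : x with x Q h^T = 0 for every row h of H *)
Definition mspace (Q H : 'M[R]_n) : 'M[R]_n := kermx (Q *m H^T).

(* b = Q-orthogonal complement of t inside m *)
Definition bspace (Q H T : 'M[R]_n) : 'M[R]_n :=
  (mspace Q H :&: kermx (Q *m T^T))%MS.

Definition torus_data (br : vec -> vec -> vec) (Q H T : 'M[R]_n) : Prop :=
  [/\ (T <= mspace Q H)%MS,
      forall h x : vec, (h <= H)%MS -> (x <= T)%MS -> br h x = 0 &
      forall x y : vec, (x <= T)%MS -> (y <= T)%MS -> br x y = 0].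

(* g = g_t + g_b in M^{G,T}: a G-invariant metric on G/H is an
   Ad(H)-invariant inner product on m (infinitesimally: ad(h)-invariant,
   H connected); t _|_g b; g_b is Ad(HT)-invariant (ad(h+t)-invariant). *)
Definition metric_in_MGT (br : vec -> vec -> vec) (Q H T G : 'M[R]_n) : Prop :=
  let m := mspace Q H in let b := bspace Q H T in
  [/\ forall x y : vec, (x <= m)%MS -> (y <= m)%MS -> bil G x y = bil G y x,
      forall x : vec, (x <= m)%MS -> x != 0 -> 0 < bil G x x,
      forall h x y : vec, (h <= H)%MS -> (x <= m)%MS -> (y <= m)%MS ->
        bil G (br h x) y + bil G x (br h y) = 0,
      forall u x : vec, (u <= T)%MS -> (x <= b)%MS -> bil G u x = 0 &
      forall u x y : vec, (u <= T)%MS -> (x <= b)%MS -> (y <= b)%MS ->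
        bil G (br u x) y + bil G x (br u y) = 0].

Definition projQ (Q T : 'M[R]_n) (Z : vec) : vec :=
  xget 0 (fun p : vec => (p <= T)%MS /\
             forall u : vec, (u <= T)%MS -> bil Q (Z - p) u = 0).

(* O'Neill tensor: A_X Y = 1/2 [X,Y]_t for X, Y in b *)
Definition A_XY (br : vec -> vec -> vec) (Q T : 'M[R]_n) (X Y : vec) : vec :=
  2^-1 *: projQ Q T (br X Y).

Definition A_XU (br : vec -> vec -> vec) (Q H T G : 'M[R]_n) (X U : vec) : vec :=
  xget 0 (fun w : vec => (w <= bspace Q H T)%MS /\
     forall Y : vec, (Y <= bspace Q H T)%MS ->
       bil G w Y = - bil G (A_XY br Q T X Y) U).

Definition g_ON_basis (G S : 'M[R]_n) (k : nat) (E : 'I_k -> vec) : Prop :=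
  k = \rank S /\ (forall i, (E i <= S)%MS) /\
  (forall i j, bil G (E i) (E j) = (i == j)%:R).

Section Norms.
Variables (br : vec -> vec -> vec) (Q H T G : 'M[R]_n).
Variables (kb kt : nat) (X : 'I_kb -> vec) (U : 'I_kt -> vec).

Definition normA2 : R :=
  \sum_(i < kb) \sum_(j < kb)
     bil G (A_XY br Q T (X i) (X j)) (A_XY br Q T (X i) (X j)).

Definition Ahat (V W : vec) : R :=
  \sum_(i < kb) bil G (A_XU br Q H T G (X i) V) (A_XU br Q H T G (X i) W).

Definition Acheck (Y Z : vec) : R :=
  \sum_(i < kb) bil G (A_XY br Q T Y (X i)) (A_XY br Q T Z (X i)).

Definition norm_Ahat : R :=
  Num.sqrt (\sum_(j < kt) \sum_(k < kt) (Ahat (U j) (U k)) ^+ 2).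
Definition norm_Acheck : R :=
  Num.sqrt (\sum_(i < kb) \sum_(j < kb) (Acheck (X i) (X j)) ^+ 2).
End Norms.
End LieDefs.

(* Main.v *)
Require Import Defs.
From HB Require Import structures.
From mathcomp Require Import all_boot all_order all_algebra.
From mathcomp Require Import boolp classical_sets reals.
From mathcomp Require Import ring lra.
Import Order.TTheory GRing.Theory Num.Theory.
Local Open Scope ring_scope.
Section Num.
Variable R : realType.

Lemma sum_sq_le (k : nat) (x : 'I_k -> R) :
  (\sum_j x j) ^+ 2 <= k%:R * \sum_j x j ^+ 2.
Proof.
set S := \sum_j x j; set Q := \sum_j x j ^+ 2.
have H : 0 <= \sum_j \sum_l (x j - x l) ^+ 2 by do 2 (apply: sumr_ge0 => ? _); exact: sqr_ge0.
have E1 j : \sum_l (x j - x l) ^+ 2 = k%:R * x j ^+ 2 - 2 * x j * S + Q.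
  rewrite (eq_bigr (fun l => x j ^+ 2 - (2 * x j) * x l + x l ^+ 2)); last by move=> l _; ring.
  by rewrite big_split /= sumrB sumr_const card_ord -mulr_sumr -/S -/Q mulr_natl; rewrite mulr_natl.
rewrite (eq_bigr _ (fun j _ => E1 j)) in H.
have E2 : \sum_(i < k) (k%:R * x i ^+ 2 - 2 * x i * S + Q) = k%:R * Q - 2 * S * S + k%:R * Q.
  rewrite big_split /= sumrB -!mulr_sumr -mulr_suml sumr_const card_ord -mulr_sumr -/S -/Q -mulr_natl; ring.
rewrite E2 in H. nra.
Qed.

Lemma gram_bound (k m : nat) (N : 'I_k -> 'I_k -> R) (a : R) :
  (k <= m)%N -> (forall j l, N j l ^+ 2 <= N j j * N l l) ->
  (forall j, 0 <= N j j) -> \sum_j N j j = a ->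
  (m%:R + 2)^-1 * a <= Num.sqrt (\sum_j \sum_l N j l ^+ 2) /\
  Num.sqrt (\sum_j \sum_l N j l ^+ 2) <= (m%:R + 2) * a.
Proof.
move=> km CS pos tr.
set S := \sum_j \sum_l N j l ^+ 2.
have S0 : 0 <= S by do 2 (apply: sumr_ge0 => ? _); exact: sqr_ge0.
have a0 : 0 <= a by rewrite -tr; apply: sumr_ge0 => ? _.
have m0 : 0 <= m%:R :> R by [].
have Sa : S <= a ^+ 2.
  apply: (@le_trans _ _ (\sum_j \sum_l N j j * N l l)).
    by apply: ler_sum => j _; apply: ler_sum => l _.
  by rewrite -tr expr2 mulr_suml; apply: ler_sum => j _; rewrite mulr_sumr.
have aS : a ^+ 2 <= k%:R * S.
  apply: (le_trans (y := k%:R * \sum_j N j j ^+ 2)); first by rewrite -tr; exact: sum_sq_le.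
  apply: ler_wpM2l => //; apply: ler_sum => j _.
  rewrite (bigD1 j) //= lerDl; apply: sumr_ge0 => ? _; exact: sqr_ge0.
have kC : k%:R <= m%:R :> R by rewrite ler_nat.
split.
  have C0 : 0 < m%:R + 2 :> R by lra.
  rewrite -(@ger0_norm _ ((m%:R + 2)^-1 * a)); last by rewrite mulr_ge0 // invr_ge0 ltW.
  rewrite -sqrtr_sqr ler_sqrt // exprMn exprVn ler_pdivrMl ?exprn_gt0 //.
  have : (m%:R + 2) ^+ 2 * S >= k%:R * S by apply: ler_wpM2r => //; nra.
  lra.
apply: (le_trans (y := a)).
  by rewrite -(ger0_norm a0) -sqrtr_sqr ler_sqrt // sqr_ge0.
nra.
Qed.
End Num.
Section Bil.
Variable R : realType.
Variable n : nat.
Local Notation vec := 'rV[R]_n.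
Implicit Types (B : 'M[R]_n) (x y z Y : vec).

Lemma bilDl B x y z : bil B (x + y) z = bil B x z + bil B y z.
Proof. by rewrite /bil !mulmxDl mxE. Qed.
Lemma bilDr B x y z : bil B x (y + z) = bil B x y + bil B x z.
Proof. by rewrite /bil linearD /= mulmxDr mxE. Qed.
Lemma bilZl B a x y : bil B (a *: x) y = a * bil B x y.
Proof. by rewrite /bil -!scalemxAl mxE. Qed.
Lemma bilZr B a x y : bil B x (a *: y) = a * bil B x y.
Proof. by rewrite /bil linearZ /= -scalemxAr mxE. Qed.
Lemma bil0l B y : bil B 0 y = 0.
Proof. by rewrite -(scale0r (0 : vec)) bilZl mul0r. Qed.
Lemma bil0r B y : bil B y 0 = 0.
Proof. by rewrite -(scale0r (0 : vec)) bilZr mul0r. Qed.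
Lemma bilNl B x y : bil B (- x) y = - bil B x y.
Proof. by rewrite -scaleN1r bilZl mulN1r. Qed.
Lemma bilNr B x y : bil B x (- y) = - bil B x y.
Proof. by rewrite -scaleN1r bilZr mulN1r. Qed.
Lemma bilBl B x y z : bil B (x - y) z = bil B x z - bil B y z.
Proof. by rewrite bilDl bilNl. Qed.
Lemma bilBr B x y z : bil B x (y - z) = bil B x y - bil B x z.
Proof. by rewrite bilDr bilNr. Qed.
Lemma bil_suml B (I : finType) (F : I -> vec) y :
  bil B (\sum_i F i) y = \sum_i bil B (F i) y.
Proof.
elim/big_rec2: _ => [|i a b _ <-]; [exact: bil0l | exact: bilDl].
Qed.
Lemma bil_sumr B (I : finType) (F : I -> vec) y :
  bil B y (\sum_i F i) = \sum_i bil B y (F i).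
Proof.
elim/big_rec2: _ => [|i a b _ <-]; [exact: bil0r | exact: bilDr].
Qed.

Lemma subBmx m1 m2 (A B : 'M[R]_(m1, n)) (C : 'M[R]_(m2, n)) :
  (A <= C)%MS -> (B <= C)%MS -> (A - B <= C)%MS.
Proof. by move=> hA hB; rewrite -scaleN1r addmx_sub // scalemx_sub. Qed.

Section ON.
Variables (G Msp S : 'M[R]_n) (k : nat) (E : 'I_k -> vec).
Hypothesis Gpos : forall x : vec, (x <= Msp)%MS -> x != 0 -> 0 < bil G x x.
Hypothesis SM : (S <= Msp)%MS.
Hypothesis EB : g_ON_basis G S E.

Lemma Gnn x : (x <= Msp)%MS -> 0 <= bil G x x.
Proof.
move=> hx; have [->|nz] := eqVneq x 0; first by rewrite bil0l.
exact/ltW/Gpos.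
Qed.

Lemma on_row_free : row_free (\matrix_i E i).
Proof.
case: EB => _ [_ ON].
apply: inj_row_free => v Hv; apply/rowP => j.
have : bil G (v *m \matrix_i E i) (E j) = 0 by rewrite Hv bil0l.
rewrite mulmx_sum_row bil_suml.
under eq_bigr => i _ do rewrite rowK bilZl ON.
rewrite (bigD1 j) //= big1 ?addr0 ?eqxx ?mulr1 ?mxE //.
by move=> i /negbTE ->; rewrite mulr0.
Qed.

Lemma on_sub_M : (\matrix_i E i <= S)%MS.
Proof. by case: EB => _ [ES _]; apply/row_subP => i; rewrite rowK. Qed.

Lemma on_span Y : (Y <= S)%MS -> (Y <= \matrix_i E i)%MS.
Proof.
move=> hY; apply: submx_trans hY _.
have [_ <-] := mxrank_leqif_sup on_sub_M.
case: EB => <- _; exact: on_row_free.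
Qed.

Lemma on_expand Y : (Y <= S)%MS -> Y = \sum_i bil G Y (E i) *: E i.
Proof.
move=> hY; case: EB => _ [ES ON].
set Z := Y - \sum_i bil G Y (E i) *: E i.
have ZS : (Z <= S)%MS.
  apply: subBmx => //; apply: summx_sub => i _; exact: scalemx_sub.
have ZE j : bil G Z (E j) = 0.
  rewrite bilBl bil_suml.
  under eq_bigr => i _ do rewrite bilZl ON.
  rewrite (bigD1 j) //= big1 ?addr0 ?eqxx ?mulr1 ?subrr //.
  by move=> i /negbTE ->; rewrite mulr0.
have : bil G Z Z = 0.
  have /submxP [D ZD] := on_span _ ZS.
  rewrite {2}ZD mulmx_sum_row bil_sumr big1 // => i _.
  by rewrite rowK bilZr ZE mulr0.
have [Z0|nz] := eqVneq Z 0.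
  move=> _; by move: Z0; rewrite /Z => /eqP; rewrite subr_eq0 => /eqP.
move=> H0; have := Gpos _ (submx_trans ZS SM) nz; by rewrite H0 ltxx.
Qed.

Lemma on_norm Y : (Y <= S)%MS -> bil G Y Y = \sum_i bil G Y (E i) ^+ 2.
Proof.
move=> hY; rewrite {2}(on_expand _ hY) bil_sumr.
by apply: eq_bigr => i _; rewrite bilZr expr2.
Qed.
End ON.
Arguments on_row_free {G S k E}.
Arguments on_sub_M {G S k E}.
Arguments on_span {G S k E} EB {Y}.
Arguments on_expand {G Msp S k E} Gpos SM EB {Y}.
Arguments on_norm {G Msp S k E} Gpos SM EB {Y}.

Section CS.
Variables (G Msp : 'M[R]_n).
Hypothesis Gpos : forall x : vec, (x <= Msp)%MS -> x != 0 -> 0 < bil G x x.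
Hypothesis Gsym : forall x y : vec, (x <= Msp)%MS -> (y <= Msp)%MS -> bil G x y = bil G y x.

Lemma gram_cs p (a b : 'I_p -> vec) :
  (forall i, (a i <= Msp)%MS) -> (forall i, (b i <= Msp)%MS) ->
  (\sum_i bil G (a i) (b i)) ^+ 2 <=
  (\sum_i bil G (a i) (a i)) * (\sum_i bil G (b i) (b i)).
Proof.
move=> ha hb.
set A := \sum_i bil G (a i) (a i); set B := \sum_i bil G (b i) (b i).
set M := \sum_i bil G (a i) (b i).
have key s t : 0 <= s ^+ 2 * A - 2 * s * t * M + t ^+ 2 * B.
  have -> : s ^+ 2 * A - 2 * s * t * M + t ^+ 2 * B =
      \sum_i bil G (s *: a i - t *: b i) (s *: a i - t *: b i).
    rewrite /A /M /B !mulr_sumr -sumrB -big_split /=.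
    apply: eq_bigr => i _.
    rewrite !bilBl !bilBr !bilZl !bilZr (Gsym _ _ (hb i) (ha i)); ring.
  apply: sumr_ge0 => i _.
 apply: (Gnn _ _ Gpos).
  by apply: subBmx; apply: scalemx_sub.
have A0 : 0 <= A by apply: sumr_ge0 => i _; exact: (Gnn _ _ Gpos).
have B0 : 0 <= B by apply: sumr_ge0 => i _; exact: (Gnn _ _ Gpos).
have k1 := key B M; have k2 := key M A; have k3 := key M 1.
have [Bp|] := ltP 0 B; first by nra.
have [Ap|] := ltP 0 A; first by nra.
move=> A0' B0'; have -> : A = 0 by apply: le_anti; rewrite A0' A0.
have -> : B = 0 by apply: le_anti; rewrite B0' B0.
rewrite mulr0; nra.
Qed.
End CS.

Lemma lin_sum (phi : vec -> vec)
  (Hl : forall a x y, phi (a *: x + y) = a *: phi x + phi y)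
  (I : finType) (c : I -> R) (F : I -> vec) :
  phi (\sum_i c i *: F i) = \sum_i c i *: phi (F i).
Proof.
have phi0 : phi 0 = 0.
  have h := Hl 1 0 0; rewrite scaler0 addr0 scale1r in h.
  by apply: (@addrI _ (phi 0)); rewrite addr0 -h.
elim/big_rec2: _ => [|i y1 y2 _ <-]; first exact: phi0.
by rewrite Hl.
Qed.

Section Proj.
Variables (Q T G Msp : 'M[R]_n) (kt : nat) (U : 'I_kt -> vec).
Hypothesis Qpos : forall x : vec, x != 0 -> 0 < bil Q x x.
Hypothesis Gpos : forall x : vec, (x <= Msp)%MS -> x != 0 -> 0 < bil G x x.
Hypothesis TM : (T <= Msp)%MS.
Hypothesis UB : g_ON_basis G T U.

Definition pspec (Z p : vec) := (p <= T)%MS /\ forall u : vec, (u <= T)%MS -> bil Q (Z - p) u = 0.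

Lemma proj_exists Z : exists p, pspec Z p.
Proof.
set MU := \matrix_i U i; set K := MU *m Q *m MU^T.
have Kunit : K \in unitmx.
  rewrite -row_free_unit; apply: inj_row_free => v Hv.
  have h0 : bil Q (v *m MU) (v *m MU) = 0.
    rewrite !mulmxA in Hv.
    by rewrite /bil trmx_mul !mulmxA Hv mul0mx mxE.
  have vM : v *m MU = 0.
    have [//|nz] := eqVneq (v *m MU) 0.
    by have := Qpos _ nz; rewrite h0 ltxx.
  apply: (row_free_inj (on_row_free UB)); by rewrite vM mul0mx.
set c := Z *m Q *m MU^T *m invmx K.
have cK : c *m MU *m Q *m MU^T = Z *m Q *m MU^T.
  by rewrite -(mulmxKV Kunit (Z *m Q *m MU^T)) /K !mulmxA.
exists (c *m MU); split.
  exact: submx_trans (submxMl _ _) (on_sub_M UB).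
move=> u hu; have /submxP [d ->] := on_span UB hu.
by rewrite /bil trmx_mul !mulmxA !mulmxBl cK subrr ?mul0mx mxE.
Qed.

Lemma proj_unique Z p p' : pspec Z p -> pspec Z p' -> p = p'.
Proof.
move=> [hp sp] [hp' sp'].
have hd : (p - p' <= T)%MS by exact: subBmx.
have : bil Q (p - p') (p - p') = 0.
  have e : (Z - p') - (Z - p) = p - p' by rewrite opprB addrC addrA subrK.
  by rewrite -e bilBl sp' ?sp // ?subrr // e.
have [/eqP|nz] := eqVneq (p - p') 0; first by rewrite subr_eq0 => /eqP.
by move=> h0; have := Qpos _ nz; rewrite h0 ltxx.
Qed.

Lemma projQ_spec Z : pspec Z (projQ Q T Z).
Proof. exact: (xgetPex 0 (proj_exists Z)). Qed.

Lemma projQ_lin a Z Z' : projQ Q T (a *: Z + Z') = a *: projQ Q T Z + projQ Q T Z'.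
Proof.
apply: proj_unique; first exact: projQ_spec.
have [h1 s1] := projQ_spec Z; have [h2 s2] := projQ_spec Z'.
split; first by apply: addmx_sub => //; exact: scalemx_sub.
move=> u hu.
have -> : a *: Z + Z' - (a *: projQ Q T Z + projQ Q T Z') =
   a *: (Z - projQ Q T Z) + (Z' - projQ Q T Z') by rewrite scalerBr opprD addrACA.
by rewrite bilDl bilZl s1 // s2 // mulr0 addr0.
Qed.
End Proj.
End Bil.

Arguments on_row_free {R n G S k E}.
Arguments on_sub_M {R n G S k E}.
Arguments on_span {R n G S k E} EB {Y}.
Arguments on_expand {R n G Msp S k E} Gpos SM EB {Y}.
Arguments on_norm {R n G Msp S k E} Gpos SM EB {Y}.
Arguments Gnn {R n G Msp} Gpos x _.
Arguments lin_sum {R n} phi Hl {I} c F.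
Arguments gram_bound {R k m N a}.
Arguments projQ_spec {R n Q T G kt U} Qpos UB Z.
Arguments projQ_lin {R n Q T G kt U} Qpos UB a Z Z'.
Arguments gram_cs {R n G Msp} Gpos Gsym {p} a b _ _.

Theorem proposition4p2 (R : realType) (m : nat) :
  exists C : R, 1 < C /\
  forall (n : nat) (br : 'rV[R]_n -> 'rV[R]_n -> 'rV[R]_n) (Q H T G : 'M[R]_n),
    is_lie_bracket br ->
    ad_inv_inner_product br Q ->
    subalgebra br H ->
    almost_effective br H ->
    \rank (mspace Q H) = m ->
    torus_data br Q H T ->
    metric_in_MGT br Q H T G ->
    forall (kb kt : nat) (X : 'I_kb -> 'rV[R]_n) (U : 'I_kt -> 'rV[R]_n),
      g_ON_basis G (bspace Q H T) X ->
      g_ON_basis G T U ->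
      [/\ C^-1 * normA2 br Q T G X <= norm_Ahat br Q H T G X U,
          norm_Ahat br Q H T G X U <= C * normA2 br Q T G X,
          C^-1 * normA2 br Q T G X <= norm_Acheck br Q T G X &
          norm_Acheck br Q T G X <= C * normA2 br Q T G X].
Proof.
exists (m%:R + 2); split.
  have : 0 <= m%:R :> R by []. lra.
move=> n br Q H T G [lin1 anti _] [Qsym Qpos _] _ _ rk [TM _ _]
  [Gsym Gpos _ _ _] kb kt X U XB UB.
set Msp := mspace Q H in rk TM Gsym Gpos.
set b := bspace Q H T in XB *.
have bM : (b <= Msp)%MS by exact: capmxSl.
have Xb k : (X k <= b)%MS by case: XB => _ [].
have XM k : (X k <= Msp)%MS by exact: submx_trans (Xb k) bM.
have AT x y : (A_XY br Q T x y <= T)%MS.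
  by apply: scalemx_sub; case: (projQ_spec Qpos UB (br x y)).
have AM x y : (A_XY br Q T x y <= Msp)%MS by exact: submx_trans (AT x y) TM.
have brlin x a y y' : br x (a *: y + y') = a *: br x y + br x y'.
  by rewrite anti lin1 opprD -scalerN -!anti.
have Alin x a y y' : A_XY br Q T x (a *: y + y') =
    a *: A_XY br Q T x y + A_XY br Q T x y'.
  by rewrite /A_XY brlin (projQ_lin Qpos UB) scalerDr !scalerA mulrC.
have flin x u Y : (Y <= b)%MS -> bil G (A_XY br Q T x Y) u =
    \sum_k bil G Y (X k) * bil G (A_XY br Q T x (X k)) u.
  move=> hY; rewrite {1}(on_expand Gpos bM XB hY).
  rewrite (lin_sum _ (Alin x)) bil_suml.
  by apply: eq_bigr => k _; rewrite bilZl.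
have AUs x u : (A_XU br Q H T G x u <= b)%MS /\ forall Y, (Y <= b)%MS ->
    bil G (A_XU br Q H T G x u) Y = - bil G (A_XY br Q T x Y) u.
  have ex : exists w : 'rV[R]_n, (w <= b)%MS /\ forall Y, (Y <= b)%MS ->
      bil G w Y = - bil G (A_XY br Q T x Y) u.
  exists (- \sum_k bil G (A_XY br Q T x (X k)) u *: X k); split.
    rewrite -scaleN1r scalemx_sub // summx_sub // => k _.
    exact: scalemx_sub.
  move=> Y hY; rewrite flin // bilNl bil_suml; congr (- _).
  by apply: eq_bigr => k _; rewrite bilZl mulrC (Gsym (X k) Y (XM k) (submx_trans hY bM)).
  exact: (xgetPex 0 ex).
have e1 : kb = \rank b by case: XB.
have kbm : (kb <= m)%N by rewrite e1 -rk mxrankS.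
have e2 : kt = \rank T by case: UB.
have ktm : (kt <= m)%N by rewrite e2 -rk mxrankS.
have trH : \sum_j Ahat br Q H T G X (U j) (U j) = normA2 br Q T G X.
  rewrite /Ahat /normA2 exchange_big /=; apply: eq_bigr => i _.
  under eq_bigr => j _ do rewrite (on_norm Gpos bM XB (AUs _ _).1).
  rewrite exchange_big; apply: eq_bigr => k _ /=.
  rewrite (on_norm Gpos TM UB (AT _ _)); apply: eq_bigr => j _.
  by rewrite (AUs _ _).2 ?sqrrN.
have trC : \sum_j Acheck br Q T G X (X j) (X j) = normA2 br Q T G X by [].
have [h1 h2] := gram_bound (N := fun j l => Ahat br Q H T G X (U j) (U l)) ktm
  (fun j l => gram_cs Gpos Gsym _ _ (fun i => submx_trans (AUs _ _).1 bM)
                                   (fun i => submx_trans (AUs _ _).1 bM))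
  (fun j => sumr_ge0 _ (fun i _ => Gnn Gpos _ (submx_trans (AUs _ _).1 bM))) trH.
have [h3 h4] := gram_bound (N := fun j l => Acheck br Q T G X (X j) (X l)) kbm
  (fun j l => gram_cs Gpos Gsym _ _ (fun i => AM _ _) (fun i => AM _ _))
  (fun j => sumr_ge0 _ (fun i _ => Gnn Gpos _ (AM _ _))) trC.
by split.
Qed.
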